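(* Let $S\subseteq\Sigma$ and let $Q_1,\ldots,Q_n$ ($n\ge1$) be atomic assertions. Then \[ S\not\vDash Q_1\oplus\cdots\oplus Q_n \quad\text{iff}\quad \exists i.\ S\vDash\overline{Q}_i \ \text{ or }\ S\vDash(\overline{Q}_1\land\cdots\land\overline{Q}_n)\oplus\top \ \text{ or }\ S\vDash\top^\oplus . \]
   Context: Nondeterministic outcome assertions: given a satisfaction relation $\vDash_\Sigma$ between program states $\sigma\in\Sigma$ and atomic assertions, a set $S\subseteq\Sigma$ satisfies an atomic assertion $P$ iff $S\neq\emptyset$ and $\sigma\vDash_\Sigma P$ for all $\sigma\in S$. Atomic assertions are closed under negation: $\overline{Q}$ is the atomic assertion with $\sigma\vDash_\Sigma\overline{Q}$ iff $\sigma\not\vDash_\Sigma Q$. Compound assertions: $S\vDash\top$ always; $S\vDash\top^\oplus$ iff $S=\emptyset$; $S\vDash\varphi\land\psi$ iff $S\vDash\varphi$ and $S\vDash\psi$; $S\vDash\varphi\oplus\psi$ iff there are $S_1,S_2$ with $S_1\cup S_2=S$, $S_1\vDash\varphi$, $S_2\vDash\psi$. *)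

(* Defs.v *)
From Stdlib Require Import Arith.
Set Implicit Arguments.

Inductive assn (A : Type) : Type :=
| Atom (a : A)
| Top
| TopPlus
| And (p q : assn A)
| Oplus (p q : assn A).

Arguments Top {A}.
Arguments TopPlus {A}.

Section Sem.
Variables (Sigma A : Type) (sat : Sigma -> A -> Prop).

Fixpoint models (S : Sigma -> Prop) (phi : assn A) : Prop :=
  match phi with
  | Atom a => (exists s, S s) /\ (forall s, S s -> sat s a)
  | Top => True
  | TopPlus => forall s, ~ S s
  | And p q => models S p /\ models S q
  | Oplus p q => exists S1 S2 : Sigma -> Prop,
      (forall s, S s <-> (S1 s \/ S2 s)) /\ models S1 p /\ models S2 q
  end.
End Sem.

(* f 0 (+) f 1 (+) ... (+) f (n-1), for n >= 1 (left-nested). *)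
Fixpoint bigOplus (A : Type) (f : nat -> assn A) (n : nat) : assn A :=
  match n with
  | 0 => TopPlus
  | 1 => f 0
  | S m => Oplus (bigOplus f m) (f m)
  end.

(* f 0 /\ f 1 /\ ... /\ f (n-1), for n >= 1 (left-nested). *)
Fixpoint bigAnd (A : Type) (f : nat -> assn A) (n : nat) : assn A :=
  match n with
  | 0 => Top
  | 1 => f 0
  | S m => And (bigAnd f m) (f m)
  end.

(* Main.v *)
Require Import Defs.
From Stdlib Require Import Arith Lia Classical.

Lemma bo_SS (A : Type) (f : nat -> assn A) m :
  bigOplus f (S (S m)) = Oplus (bigOplus f (S m)) (f (S m)).
Proof. reflexivity. Qed.

Lemma ba_SS (A : Type) (f : nat -> assn A) m :
  bigAnd f (S (S m)) = And (bigAnd f (S m)) (f (S m)).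
Proof. reflexivity. Qed.

Lemma L1 (Sigma A : Type) (sat : Sigma -> A -> Prop) (Q : nat -> A) m :
  forall X : Sigma -> Prop,
  models sat X (bigOplus (fun i => Atom (Q i)) (S m)) <->
  ((forall i, i < S m -> exists s, X s /\ sat s (Q i)) /\
   (forall s, X s -> exists i, i < S m /\ sat s (Q i))).
Proof.
  induction m as [|m IH]; intro X.
  - simpl. split.
    + intros [[s Hs] H]. split.
      * intros i Hi. assert (i = 0) by lia. subst. exists s; auto.
      * intros s' Hs'. exists 0. split; [lia| auto].
    + intros [H1 H2]. split.
      * destruct (H1 0 ltac:(lia)) as [s [Hs _]]. exists s; auto.
      * intros s Hs. destruct (H2 s Hs) as [i [Hi Hq]].
        assert (i = 0) by lia. subst. auto.
  - rewrite bo_SS. simpl models at 1. split.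
    + intros [S1 [S2 [Hc [H1 [[s2 Hs2] H2]]]]].
      apply IH in H1. destruct H1 as [H1a H1b]. split.
      * intros i Hi. destruct (Nat.eq_dec i (S m)).
        -- subst. exists s2. split; [apply Hc; auto | auto].
        -- destruct (H1a i ltac:(lia)) as [s [Hs Hq]].
           exists s. split; [apply Hc; auto| auto].
      * intros s Hs. apply Hc in Hs. destruct Hs as [Hs|Hs].
        -- destruct (H1b s Hs) as [i [Hi Hq]]. exists i. split; [lia|auto].
        -- exists (S m). split; [lia| auto].
    + intros [H1 H2].
      exists (fun s => X s /\ exists i, i < S m /\ sat s (Q i)).
      exists (fun s => X s /\ sat s (Q (S m))).
      split; [|split].
      * intro s. split.
        -- intro Hs. destruct (H2 s Hs) as [i [Hi Hq]].
           destruct (Nat.eq_dec i (S m)).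
           ++ subst. right. auto.
           ++ left. split; auto. exists i. split; [lia|auto].
        -- intros [[Hs _]|[Hs _]]; auto.
      * apply IH. split.
        -- intros i Hi. destruct (H1 i ltac:(lia)) as [s [Hs Hq]].
           exists s. split; auto. split; auto. exists i; auto.
        -- intros s [Hs [i Hi]]. exists i; auto.
      * split.
        -- destruct (H1 (S m) ltac:(lia)) as [s [Hs Hq]]. exists s; auto.
        -- intros s [_ Hq]; auto.
Qed.

Lemma L2 (Sigma A : Type) (sat : Sigma -> A -> Prop)
  (neg : A -> A) (Hneg : forall s a, sat s (neg a) <-> ~ sat s a) (Q : nat -> A) m :
  forall X : Sigma -> Prop,
  models sat X (bigAnd (fun i => Atom (neg (Q i))) (S m)) <->
  ((exists s, X s) /\ (forall s, X s -> forall i, i < S m -> ~ sat s (Q i))).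
Proof.
  induction m as [|m IH]; intro X.
  - simpl. split.
    + intros [He H]. split; auto. intros s Hs i Hi. assert (i = 0) by lia. subst.
      apply Hneg. auto.
    + intros [He H]. split; auto. intros s Hs. apply Hneg. apply H; auto.
  - rewrite ba_SS. simpl models at 1. rewrite IH. split.
    + intros [[He H] [_ H2]]. split; auto. intros s Hs i Hi.
      destruct (Nat.eq_dec i (S m)).
      * subst. apply Hneg. auto.
      * apply H; auto. lia.
    + intros [He H]. split; split; auto.
      intros s Hs. apply Hneg. apply H; auto.
Qed.

Theorem lemma5p5 (Sigma A : Type) (sat : Sigma -> A -> Prop)
  (neg : A -> A) (Hneg : forall s a, sat s (neg a) <-> ~ sat s a)
  (S : Sigma -> Prop) (n : nat) (Q : nat -> A) (Hn : 1 <= n) :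
  ~ models sat S (bigOplus (fun i => Atom (Q i)) n) <->
  ((exists i, i < n /\ models sat S (Atom (neg (Q i))))
   \/ models sat S (Oplus (bigAnd (fun i => Atom (neg (Q i))) n) Top)
   \/ models sat S TopPlus).
Proof.
  destruct n as [|m]; [lia|].
  rewrite L1. simpl models.
  split.
  - intro H. apply not_and_or in H. destruct H as [H|H].
    + apply not_all_ex_not in H. destruct H as [i H].
      destruct (classic (exists s, S s)) as [[s0 Hs0]|Hne].
      * left. exists i. split.
        -- apply NNPP. intro Hc. apply H. intro Hi. lia.
        -- split; [exists s0; auto|]. intros s Hs. apply Hneg. intro Hq.
           apply H. intros _. exists s; auto.
      * right; right. intros s Hs. apply Hne. exists s; auto.
    + apply not_all_ex_not in H. destruct H as [s H].
      destruct (classic (S s)) as [Hs|Hs].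
      * right; left. exists (fun x => x = s). exists S. split; [|split].
        -- intro x. split; auto. intros [->|]; auto.
        -- apply L2; auto. split; [exists s; auto|].
           intros x -> i Hi Hq. apply H. intros _. exists i; auto.
        -- exact I.
      * exfalso. apply H. intro Hs'. contradiction.
  - intros [[i [Hi [_ Hall]]]|[[S1 [S2 [Hc [H1 _]]]]|He]] [Ha Hb].
    + destruct (Ha i Hi) as [s [Hs Hq]]. apply (Hneg s (Q i)); auto.
    + apply L2 in H1; auto. destruct H1 as [[s Hs] H1].
      destruct (Hb s (proj2 (Hc s) (or_introl Hs))) as [i [Hi Hq]].
      apply (H1 s Hs i Hi Hq).
    + destruct (Ha 0 ltac:(lia)) as [s [Hs _]]. apply (He s Hs).
Qed.
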